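(* Let $p(0)\in\mathcal M_1^+$ be such that all coefficients $a(p(0))_k$, $k\in\mathbb N_0$, are finite, let $p(t+1)=\mathcal R_1(p(t))$ for $t\in\mathbb N_0$, and put $a_k(t)=a(p(t))_k$ and $\alpha=a_1(0)$. Then $\lim_{t\to\infty}a_k(t)=\alpha^k$ for all $k\ge0$.
   Context: $\mathcal M_1^+$ is the set of probability measures on $\mathbb N_0$, identified with nonnegative sequences summing to $1$. $\mathcal R_1(p)_i=\sum_{k,\ell\ge0,\ k+\ell\ge i}\frac{1+\min\{k,\ell,i,k+\ell-i\}}{(k+1)(\ell+1)}p_kp_\ell$. For $p\in\mathcal M_1^+$, $a(p)_k=\frac{1}{k+1}\sum_{\ell\ge k}\binom{\ell}{k}p_\ell\in[0,\infty]$ (so $a(p)_0=1$ and $a(p)_1=\frac12\sum_\ell \ell p_\ell$). *)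

(* Defs.v *)
From mathcomp Require Import all_boot all_order all_algebra.
From mathcomp Require Import all_classical all_reals all_analysis.
Set Implicit Arguments. Unset Strict Implicit. Unset Printing Implicit Defensive.
Import Order.TTheory GRing.Theory Num.Theory.
Local Open Scope ring_scope.
Local Open Scope ereal_scope.

Section Defs.
Variable R : realType.

Definition is_prob (p : nat -> R) : Prop :=
  (forall k, (0 <= p k)%R) /\ \sum_(k <oo) (p k)%:E = 1.

(* coefficient of p_k p_l in R_1(p)_i (zero unless k + l >= i) *)
Definition R1coef (i k l : nat) : R :=
  if (i <= k + l)%N then
    ((1 + (minn (minn k l) (minn i (k + l - i)))%:R) /
     ((k.+1)%:R * (l.+1)%:R))%R
  else 0%R.

Definition R1e (p : nat -> R) (i : nat) : \bar R :=
  \sum_(k <oo) \sum_(l <oo) (R1coef i k l * p k * p l)%:E.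

(* R_1(p), a real sequence; finite whenever p is in M_1^+ *)
Definition R1 (p : nat -> R) : nat -> R := fun i => fine (R1e p i).

Definition acoef (p : nat -> R) (k : nat) : \bar R :=
  ((k.+1)%:R^-1)%:E * \sum_(k <= l <oo) (('C(l, k))%:R * p l)%:E.

End Defs.

(* Main.v *)
Require Import Defs.
From mathcomp Require Import all_boot all_order all_algebra.
From mathcomp Require Import all_classical all_reals all_analysis.
From mathcomp Require Import zify ring lra.
Import Order.TTheory GRing.Theory Num.Theory.
Set Implicit Arguments. Unset Strict Implicit. Unset Printing Implicit Defensive.

Lemma cnt_lem K L i : \sum_(u < K.+1) ((u <= i) && (i - u <= L) : nat) =
  if i <= K + L then (minn (minn K L) (minn i (K+L-i))).+1 else 0.
Proof.
elim: K => [|K IH].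
  rewrite big_ord1 /=; case: ifP => h; lia.
rewrite big_ord_recr /= IH.
case: (leqP K.+1 i) => a; case: (leqP (i - K.+1) L) => b /=; case: ifP => h1; case: ifP => h2; lia.
Qed.

Lemma reidx K L u (f : nat -> nat) : u <= K ->
  \sum_(i < K+L+1) ((u <= i) && (i - u <= L)) * f i = \sum_(v < L.+1) f (u+v).
Proof.
move=> uK.
rewrite -(big_mkord (fun _ => true) (fun i => ((u <= i) && (i - u <= L)) * f i)).
rewrite (@big_cat_nat _ _ _ u 0 (K+L+1)) /=; [|lia|lia].
rewrite (@big_cat_nat _ _ _ (u + L.+1) u (K+L+1)) /=; [|lia|lia].
rewrite big1_seq ?add0n; last first.
  move=> i /andP[_]; rewrite mem_index_iota => /andP[_ h].
  have -> : (u <= i) = false by lia. by [].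
rewrite [X in _ + X]big1_seq ?addn0; last first.
  move=> i /andP[_]; rewrite mem_index_iota => /andP[h _].
  have -> : (i - u <= L) = false by lia. by rewrite andbF.
rewrite -{1}(add0n u) big_addn.
have -> : u + L.+1 - u = L.+1 by lia.
rewrite big_mkord; apply: eq_bigr => v _.
have -> : (u <= v + u) && (v + u - u <= L) by apply/andP; split; have := ltn_ord v; lia.
by rewrite mul1n addnC.
Qed.

Lemma hockey K j : \sum_(u < K.+1) 'C(u, j) = 'C(K.+1, j.+1).
Proof.
elim: K => [|K IH]; first by rewrite big_ord1 bin0n; case: j.
by rewrite big_ord_recr /= IH [in RHS]binS.
Qed.

Definition cl K L k := \sum_(i < K+L+1) 'C(i,k) * (minn (minn K L) (minn i (K+L-i))).+1.
Definition cr K L k := \sum_(j < k.+1) 'C(K.+1, j.+1) * 'C(L.+1, (k-j).+1).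
Lemma comb_nat K L k : cl K L k = cr K L k.
Proof.
rewrite /cl /cr.
transitivity (\sum_(i < K+L+1) \sum_(u < K.+1) ((u <= i) && (i - u <= L)) * 'C(i,k)).
  apply: eq_bigr => i _; rewrite -big_distrl /= cnt_lem.
  have -> : i <= K + L by have := ltn_ord i; lia.
  by rewrite mulnC.
rewrite exchange_big /=.
transitivity (\sum_(u < K.+1) \sum_(v < L.+1) \sum_(j < k.+1) 'C(u, j) * 'C(v, k - j)).
  apply: eq_bigr => u _; rewrite (@reidx K L u (fun i => 'C(i,k))); last by have := ltn_ord u; lia.
  by apply: eq_bigr => v _; rewrite binomial.Vandermonde.
transitivity (\sum_(j < k.+1) \sum_(u < K.+1) \sum_(v < L.+1) 'C(u, j) * 'C(v, k - j)).
  under eq_bigr => u _ do rewrite exchange_big. by rewrite exchange_big.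
apply: eq_bigr => j _.
rewrite -hockey -hockey big_distrl /=; apply: eq_bigr => u _.
by rewrite big_distrr.
Qed.


Section CombReal.
Local Open Scope ring_scope.


Definition w {R : realType} (j K : nat) : R := 'C(K,j)%:R / j.+1%:R.

Lemma wE (R : realType) j K : w j K = 'C(K.+1,j.+1)%:R / K.+1%:R :> R.
Proof.
rewrite /w; apply/eqP; rewrite eqr_div ?pnatr_eq0 // -!natrM; apply/eqP; congr (_%:R).
have := mul_bin_diag K.+1 j; rewrite /= => h.
by rewrite mulnC h mulnC.
Qed.

Lemma comb_real (R : realType) K L k :
  \sum_(i < K+L+1) w k i * R1coef R i K L =
  (k.+1%:R)^-1 * \sum_(j < k.+1) w j K * w (k-j) L.
Proof.
pose D : R := k.+1%:R * (K.+1%:R * L.+1%:R).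
have D0 : D != 0 by rewrite /D -!natrM pnatr_eq0.
transitivity ((cl K L k)%:R / D).
  rewrite /cl natr_sum mulr_suml; apply: eq_bigr => i _.
  rewrite /w /R1coef.
  have -> : (i <= K + L)%N by have := ltn_ord i; lia.
  rewrite nat1r (natrM R) /D. field.
  by rewrite !nat1r !pnatr_eq0.
rewrite comb_nat /cr natr_sum mulr_suml mulr_sumr; apply: eq_bigr => j _.
rewrite !wE natrM /D; field.
by rewrite !nat1r !pnatr_eq0.
Qed.

End CombReal.

Section Ser.
Local Open Scope ring_scope.
Lemma w_ge0 (R : realType) j K : 0 <= w j K :> R.
Proof. by rewrite /w divr_ge0. Qed.

Lemma c_ge0 (R : realType) i K L : 0 <= R1coef R i K L.
Proof. by rewrite /R1coef; case: ifP => // _; rewrite divr_ge0 // addr_ge0. Qed.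



Local Open Scope ereal_scope.
Lemma trunc (R : realType) (f : nat -> R) N : (forall i, 0 <= f i)%R ->
  (forall i, (N <= i)%N -> f i = 0%R) ->
  \sum_(i <oo) (f i)%:E = (\sum_(i < N) f i)%:E.
Proof.
move=> f0 fN.
rewrite (nneseries_split 0 N); last by move=> k _; rewrite lee_fin.
rewrite eseries0 ?adde0; last by move=> i; rewrite add0n => /fN ->.
by rewrite add0n sumEFin big_mkord.
Qed.

Lemma acoefE (R : realType) (q : nat -> R) (q0 : forall k, (0 <= q k)%R) j :
  acoef q j = \sum_(K <oo) (w j K * q K)%:E.
Proof.
rewrite /acoef ereal_series eseries_mkcond -nneseriesZl; last first.
  by move=> i _; case: ifP => // _; rewrite lee_fin mulr_ge0.
apply: eq_eseriesr => K _; case: ifP => h.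
  by rewrite -EFinM /w; congr EFin; rewrite mulrC -!mulrA [X in (_ * X)%R]mulrC.
by rewrite /w bin_small ?ltnNge ?h // !mul0r mule0.
Qed.

End Ser.
Section Main.
Local Open Scope ring_scope.
Local Open Scope ereal_scope.
Lemma mainM (R : realType) (q : nat -> R) (q0 : forall k, (0 <= q k)%R)
  (qfin : forall j, acoef q j \is a fin_num) k :
  \sum_(i <oo) ((w k i)%:E * R1e q i) =
  ((k.+1%:R)^-1 * \sum_(j < k.+1) fine (acoef q j) * fine (acoef q (k - j)))%:E.
Proof.
have F0 i K L : (0 <= w k i * (R1coef R i K L * q K * q L))%R.
  by rewrite mulr_ge0 ?w_ge0 // !mulr_ge0 ?c_ge0.
transitivity (\sum_(i <oo) \sum_(K <oo) \sum_(L <oo)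
   (w k i * (R1coef R i K L * q K * q L))%:E).
  apply: eq_eseriesr => i _; rewrite /R1e -nneseriesZl; last first.
    by move=> K _; apply: nneseries_ge0 => L _; rewrite lee_fin !mulr_ge0 ?c_ge0.
  apply: eq_eseriesr => K _; rewrite -nneseriesZl; last first.
    by move=> L _; rewrite lee_fin !mulr_ge0 ?c_ge0.
  by apply: eq_eseriesr => L _; rewrite EFinM.
rewrite nneseries_interchange; last first.
  by move=> i K; apply: nneseries_ge0 => L _; rewrite lee_fin.
transitivity (\sum_(K <oo) \sum_(L <oo)
   (q K * q L * ((k.+1%:R)^-1 * \sum_(j < k.+1) w j K * w (k-j) L))%:E).
  apply: eq_eseriesr => K _; rewrite nneseries_interchange; last by move=> *; rewrite lee_fin.
  apply: eq_eseriesr => L _; rewrite (@trunc _ _ (K+L+1)) //; last first.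
    move=> i hi; rewrite /R1coef; have -> : (i <= K + L)%N = false by lia.
    by rewrite !mul0r mulr0.
  by rewrite -comb_real mulr_sumr; congr EFin; apply: eq_bigr => i _; ring.
set c := ((k.+1%:R)^-1)%R.
have c0 : (0 <= c)%R by rewrite /c invr_ge0.
have X0 j K L : 0 <= ((w j K * q K) * (w (k-j) L * q L))%:E.
  by rewrite lee_fin !mulr_ge0 ?w_ge0.
transitivity (\sum_(K <oo) \sum_(L <oo)
   (c%:E * \sum_(j < k.+1) ((w j K * q K) * (w (k-j) L * q L))%:E)).
  apply: eq_eseriesr => K _; apply: eq_eseriesr => L _.
  rewrite sumEFin -EFinM; congr EFin; rewrite mulrCA; congr (_ * _)%R.
  by rewrite mulr_sumr; apply: eq_bigr => j _; ring.
transitivity (\sum_(K <oo) (c%:E * \sum_(L <oo)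
   \sum_(j < k.+1) ((w j K * q K) * (w (k-j) L * q L))%:E)).
  by apply: eq_eseriesr => K _; apply: nneseriesZl => L _; apply: sume_ge0.
rewrite nneseriesZl; last by move=> K _; apply: nneseries_ge0 => L _ _; by apply: sume_ge0 => j _; apply: X0.
rewrite EFinM; congr (_ * _).
transitivity (\sum_(K <oo) \sum_(j < k.+1) \sum_(L <oo)
   ((w j K * q K) * (w (k-j) L * q L))%:E).
  by apply: eq_eseriesr => K _; apply: nneseries_sum.
rewrite nneseries_sum; last by move=> j K _; apply: nneseries_ge0.
rewrite -sumEFin; apply: eq_bigr => j _.
transitivity (\sum_(K <oo) ((fine (acoef q (k-j)) * (w j K * q K))%:E)).
  apply: eq_eseriesr => K _.
  under eq_eseriesr do rewrite EFinM.
  rewrite nneseriesZl; last by move=> L _; rewrite lee_fin mulr_ge0 ?w_ge0.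
  by rewrite -acoefE // [RHS]EFinM fineK // muleC.
under eq_eseriesr do rewrite EFinM.
rewrite nneseriesZl; last by move=> L _; rewrite lee_fin mulr_ge0 ?w_ge0.
by rewrite -acoefE // EFinM !fineK // muleC.
Qed.

Definition good (R : realType) (q : nat -> R) :=
  [/\ (forall k, (0 <= q k)%R), (forall j, acoef q j \is a fin_num) & acoef q 0 = 1].

Lemma R1e_ge0 (R : realType) (q : nat -> R) (q0 : forall k, (0 <= q k)%R) i : 0 <= R1e q i.
Proof.
apply: nneseries_ge0 => K _ _; apply: nneseries_ge0 => L _ _.
by rewrite lee_fin !mulr_ge0 ?c_ge0.
Qed.

Lemma step (R : realType) (q : nat -> R) : good q ->
  good (R1 q) /\ forall k, acoef (R1 q) k =
   ((k.+1%:R)^-1 * \sum_(j < k.+1) fine (acoef q j) * fine (acoef q (k - j)))%:E.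
Proof.
case=> q0 qfin qa0.
have w0i i : w 0 i = 1%R :> R by rewrite /w bin0 divr1.
have hsum : \sum_(i <oo) R1e q i = ((0.+1%:R)^-1 * \sum_(j < 0.+1) fine (acoef q j) * fine (acoef q (0 - j)))%:E.
  by rewrite -(mainM q0 qfin 0); apply: eq_eseriesr => i _; rewrite w0i mul1e.
have hfin i : R1e q i \is a fin_num.
  rewrite ge0_fin_numE ?R1e_ge0 //.
  apply: (@le_lt_trans _ _ (\sum_(i <oo) R1e q i)).
    rewrite (@nneseriesD1 _ _ i xpredT) //; last by move=> *; apply: R1e_ge0.
    by rewrite leeDl // nneseries_ge0 // => *; apply: R1e_ge0.
  by rewrite hsum ltry.
have R10 k : (0 <= R1 q k)%R by rewrite /R1 fine_ge0 // R1e_ge0.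
have key k : acoef (R1 q) k =
   ((k.+1%:R)^-1 * \sum_(j < k.+1) fine (acoef q j) * fine (acoef q (k - j)))%:E.
  rewrite acoefE // -mainM //; apply: eq_eseriesr => i _.
  by rewrite EFinM /R1 fineK.
split=> //; split=> //.
- by move=> j; rewrite key.
- by rewrite key big_ord1 qa0 /= invr1 !mul1r.
Qed.

End Main.

Module LimPart.
Import numFieldNormedType.Exports.
Local Open Scope classical_set_scope.
Local Open Scope ring_scope.
Lemma lin_rec (R : realType) (x c : nat -> R) (r l : R) : 0 <= r < 1 ->
  (forall t, x t.+1 = r * x t + c t) -> (c @ \oo --> (1 - r) * l) -> (x @ \oo --> l).
Proof.
move=> /andP[r0 r1] hx hc.
apply/cvgrPdist_le => eps eps0.
have e2 : 0 < eps * (1 - r) / 2 by rewrite divr_gt0 // mulr_gt0 // subr_gt0.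
move/cvgrPdist_le: hc => /(_ _ e2) [T _ hT].
set E := `|l - x T|.
have E0 : 0 <= E by rewrite /E normr_ge0.
have ind m : `|l - x (T + m)%N| <= eps / 2 + r ^+ m * E.
  elim: m => [|m IH].
    by rewrite addn0 expr0 mul1r -/E; lra.
  rewrite addnS hx.
  have -> : l - (r * x (T + m)%N + c (T + m)%N) =
     r * (l - x (T + m)%N) + ((1 - r) * l - c (T + m)%N) by ring.
  apply: le_trans (ler_normD _ _) _.
  rewrite normrM (ger0_norm r0).
  have h1 := hT (T + m)%N (leq_addr _ _).
  have h2 : r * `|l - x (T + m)%N| <= r * (eps / 2 + r ^+ m * E) by rewrite ler_wpM2l.
  rewrite exprS; nra.
have rn : `|r| < 1 by rewrite ger0_norm.
have e3 : 0 < eps / 2 / (E + 1) by rewrite !divr_gt0 // ltr_wpDl.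
move/cvgrPdist_le: (cvg_expr rn) => /(_ _ e3) [N _ hN].
exists (T + N)%N => // t /= ht.
have -> : t = (T + (t - T))%N by lia.
apply: le_trans (ind _) _.
have := hN (t - T)%N ltac:(rewrite /=; lia).
rewrite sub0r normrN ger0_norm ?exprn_ge0 // => h.
have : r ^+ (t - T) * E <= eps / 2 / (E + 1) * E by rewrite ler_wpM2r.
have : eps / 2 / (E + 1) * E <= eps / 2.
  have -> : eps / 2 / (E + 1) * E = eps / 2 - eps / 2 / (E + 1).
    by field; rewrite gt_eqF // ltr_wpDl.
  have : 0 <= eps / 2 / (E + 1) by rewrite ltW.
  lra.
lra.
Qed.

Lemma cvg_sumR (R : realType) n (f : nat -> nat -> R) (l : nat -> R) :
  (forall j, (j < n)%N -> f j @ \oo --> l j) ->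
  (fun t => \sum_(j < n) f j t) @ \oo --> \sum_(j < n) l j.
Proof.
elim: n => [|n IH] hf.
  under eq_fun do rewrite big_ord0.
  by rewrite big_ord0; exact: cvg_cst.
under eq_fun do rewrite big_ord_recr.
rewrite big_ord_recr; apply: cvgD.
  by apply: IH => j hj; apply: hf; lia.
exact: hf.
Qed.

Lemma bconv (R : realType) (b : nat -> nat -> R) (b0 : forall t, b t 0%N = 1)
  (hb : forall t k, b t.+1 k = (k.+1%:R)^-1 * \sum_(j < k.+1) b t j * b t (k - j)%N) :
  forall k, (fun t => b t k) @ \oo --> (b 0%N 1%N) ^+ k.
Proof.
set a := b 0%N 1%N.
have b1 t : b t 1%N = a.
  elim: t => [//|t IH].
  rewrite hb !big_ord_recr big_ord0 /= b0 IH.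
  by field.
move=> k; elim/ltn_ind: k => k IH.
case: k IH => [|[|m]] IH.
- under eq_fun do rewrite b0. by rewrite expr0; exact: cvg_cst.
- under eq_fun do rewrite b1. by rewrite expr1; exact: cvg_cst.
pose r : R := 2 / m.+3%:R.
pose c t := m.+3%:R^-1 * \sum_(j < m.+1) b t j.+1 * b t (m.+1 - j)%N.
apply: (@lin_rec _ _ c r).
- rewrite /r divr_ge0 //= ltr_pdivrMr // mul1r ltr_nat //.
- move=> t; rewrite hb big_ord_recl big_ord_recr /=.
  have bump0 i : bump 0 i = i.+1 by [].
  under eq_bigr do rewrite bump0 subSS.
  rewrite bump0 subSS subnn subn0 !b0 /c /r.
  by field.
have -> : (1 - r) * a ^+ m.+2 = m.+3%:R^-1 * \sum_(j < m.+1) a ^+ j.+1 * a ^+ (m.+1 - j)%N.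
  rewrite (eq_bigr (fun _ => a ^+ m.+2)); last first.
    by move=> j _; rewrite -exprD; congr (_ ^+ _); have := ltn_ord j; lia.
  rewrite sumr_const card_ord -mulr_natl /r; field.
  by rewrite gt_eqF // ltr_wpDr.
have hs : (fun t => \sum_(j < m.+1) b t j.+1 * b t (m.+1 - j)%N) @ \oo -->
   \sum_(j < m.+1) a ^+ j.+1 * a ^+ (m.+1 - j)%N.
  apply: (@cvg_sumR _ m.+1 (fun j t => b t j.+1 * b t (m.+1 - j)%N) (fun j => a ^+ j.+1 * a ^+ (m.+1 - j)%N)) => j hj.
  by apply: (@cvgM _ _ _ _ (fun t => b t j.+1) (fun t => b t (m.+1 - j)%N)); apply: IH; lia.
rewrite /c; have := @cvgMl_tmp _ _ _ _ _ (m.+3%:R^-1) _ hs; exact.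
Qed.

End LimPart.

Local Open Scope classical_set_scope.
Local Open Scope ring_scope.

Theorem proposition11 (R : realType) (p : nat -> nat -> R)
  (hp0 : is_prob (p 0%N))
  (hfin : forall k : nat, acoef (p 0%N) k \is a fin_num)
  (hrec : forall t : nat, p t.+1 = R1 (p t)) :
  forall k : nat,
    (fun t : nat => acoef (p t) k) @ \oo --> ((fine (acoef (p 0%N) 1%N)) ^+ k)%:E.
Proof.
have G : forall t, good (p t).
  elim=> [|t IH].
    case: hp0 => q0 qs; split => //.
    rewrite acoefE //; rewrite -qs; apply: eq_eseriesr => K _.
    by rewrite /w bin0 divr1 mul1r.
  by rewrite hrec; case: (step IH).
pose b t k := fine (acoef (p t) k).
have b0 t : b t 0%N = 1 by rewrite /b; case: (G t) => _ _ ->.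
have hb t k : b t.+1 k = (k.+1%:R)^-1 * \sum_(j < k.+1) b t j * b t (k - j)%N.
  by rewrite /b hrec; case: (step (G t)) => _ ->.
move=> k.
have -> : (fun t => acoef (p t) k) = (fun t => (b t k)%:E).
  by apply/funext => t; rewrite /b fineK //; case: (G t).
apply: cvg_EFin; first exact: nearW.
exact: (LimPart.bconv b0 hb).
Qed.
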